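(* Let $f$ be a homeomorphism of $\mathbb{A}$ commuting with the vertical translation $z\mapsto z+(0,1)$, with bounded diffusion, and let $\mathcal{C}$ be an essential $f$-invariant circloid. Then $\sup_{n\in\mathbb{Z},z\in\mathbb{A}}|\mathrm{pr}_2(f^n(z)-z)|\le VD(\mathcal{C})+1$.
   Context: $\mathbb{A}=\mathbb{R}^2/\sim$ where $(x,y)\sim(x',y')$ iff $x-x'\in\mathbb{Z}$ and $y=y'$; $\mathrm{pr}_2$ is the second coordinate, $\mathrm{pr}_2(g(z)-z):=\mathrm{pr}_2(g(z))-\mathrm{pr}_2(z)$. Bounded diffusion means $\sup_{n\in\mathbb{Z},z\in\mathbb{A}}|\mathrm{pr}_2(f^n(z)-z)|<\infty$. An annular continuum in $\mathbb{A}$ is a compact connected set $\mathcal{C}$ whose complement consists of exactly two disjoint essential open topological annuli, each a neighborhood of one of the two ends of $\mathbb{A}$. A circloid is an annular continuum not properly containing another annular continuum. The vertical diameter is $VD(\mathcal{C})=\max_{x\in\mathcal{C}}\mathrm{pr}_2(x)-\min_{y\in\mathcal{C}}\mathrm{pr}_2(y)$. *)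

(* Defs.v *)
From HB Require Import structures.
From mathcomp Require Import all_boot all_order all_algebra.
From mathcomp Require Import all_classical all_reals all_analysis.
From mathcomp Require Import subtype_topology.
Set Implicit Arguments. Unset Strict Implicit. Unset Printing Implicit Defensive.
Import Order.TTheory GRing.Theory Num.Theory.
Import numFieldNormedType.Exports.
Local Open Scope classical_set_scope.
Local Open Scope ring_scope.

(* The unit circle S^1 as a subspace of R^2 (carrier of R/Z up to homeomorphism) *)
Definition circle_set (R : realType) : set (R * R)%type :=
  [set p | p.1 ^+ 2 + p.2 ^+ 2 = 1].
Definition S1 (R : realType) : topologicalType := @set_type _ (@circle_set R).

Definition Ann (R : realType) : topologicalType := (S1 R * R)%type.

Definition pr2 (R : realType) (z : Ann R) : R := z.2.
Arguments pr2 {R} z.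

Definition vtrans (R : realType) (z : Ann R) : Ann R := (z.1, z.2 + 1).
Arguments vtrans {R} z.

Definition homeomorphic (X Y : topologicalType) : Prop :=
  exists (h : X -> Y) (g : Y -> X),
    [/\ continuous h, continuous g, cancel h g & cancel g h].

(* f^n for n in Z, given the inverse homeomorphism g of f *)
Definition zpow (R : realType) (f g : Ann R -> Ann R) (n : int) : Ann R -> Ann R :=
  match n with
  | Posz k => iter k f
  | Negz k => iter k.+1 g
  end.

Definition top_disk (R : realType) (D : set (Ann R)) : Prop :=
  open D /\ homeomorphic (@set_type _ D) (R * R)%type.

Definition top_annulus (R : realType) (U : set (Ann R)) : Prop :=
  open U /\ homeomorphic (@set_type _ U) (Ann R).

Definition essential (R : realType) (E : set (Ann R)) : Prop :=
  ~ (exists D, top_disk D /\ E `<=` D).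

Definition nbhd_upper_end (R : realType) (U : set (Ann R)) : Prop :=
  exists t : R, forall z : Ann R, t < pr2 z -> U z.
Definition nbhd_lower_end (R : realType) (U : set (Ann R)) : Prop :=
  exists t : R, forall z : Ann R, pr2 z < t -> U z.

Definition annular_continuum (R : realType) (C : set (Ann R)) : Prop :=
  [/\ compact C, connected C &
   exists U V : set (Ann R),
     [/\ ~` C = U `|` V, U `&` V = set0,
         top_annulus U /\ top_annulus V,
         essential U /\ essential V &
         nbhd_upper_end U /\ nbhd_lower_end V]].

Definition circloid (R : realType) (C : set (Ann R)) : Prop :=
  annular_continuum C /\
  forall C' : set (Ann R), annular_continuum C' -> C' `<=` C -> C' = C.

(* vertical diameter: max pr2 - min pr2 over C (sup/inf, attained for compact C) *)
Definition VD (R : realType) (C : set (Ann R)) : R :=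
  sup (pr2 @` C) - inf (pr2 @` C).

Definition bounded_diffusion (R : realType) (f g : Ann R -> Ann R) : Prop :=
  exists M : R, forall (n : int) (z : Ann R),
    `| pr2 (zpow f g n z) - pr2 z | <= M.

(* Main.v *)
Require Import Defs.
From HB Require Import structures.
From mathcomp Require Import all_boot all_order all_algebra.
From mathcomp Require Import all_classical all_reals all_analysis.
From mathcomp Require Import subtype_topology.
From mathcomp Require Import lra.
Import Order.TTheory GRing.Theory Num.Theory.
Import numFieldNormedType.Exports.
Set Implicit Arguments.
Local Open Scope classical_set_scope.
Local Open Scope ring_scope.

Section S.
Variable R : realType.

Lemma is_interval_conn (J : set R) : is_interval J -> connected J.
Proof. by move=> h; apply/connected_intervalP. Qed.

Lemma circ_pt (t : R) : @circle_set R (cos t, sin t).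
Proof. by rewrite /circle_set /= cos2Dsin2. Qed.

Definition cis (t : R) : S1 R := SigSub (mem_set (circ_pt t)).

Lemma cis_cont : continuous cis.
Proof.
have H := @continuous_comp_initial _ R (R*R)%type (@set_val _ (@circle_set R)) cis.
refine (H _) => t /=.
have := cvg_pair (@continuous_cos R t) (@continuous_sin R t). rewrite /continuous_at /=. move=> K; exact: K.
Qed.

Lemma cis_surj (p : S1 R) : exists t, cis t = p.
Proof.
case: p => [[x y] hp].
have e : x ^+ 2 + y ^+ 2 = 1 by move: hp; rewrite inE.
have hx : -1 <= x <= 1 by apply/andP; split; nra.
have hs : Num.sqrt (1 - x ^+ 2) = `|y|.
  by rewrite -sqrtr_sqr; congr Num.sqrt; lra.
have [y0|y0] := leP 0 y.
  exists (acos x); apply: val_inj => /=.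
  by rewrite acosK ?in_itv //= sin_acos // hs ger0_norm.
exists (- acos x); apply: val_inj => /=.
by rewrite cosN sinN acosK ?in_itv //= sin_acos // hs ltr0_norm ?opprK.
Qed.

Lemma connT_R : connected (@setT R).
Proof. by apply/connected_intervalP => x y _ _ z _. Qed.

Lemma S1_conn : connected (@setT (S1 R)).
Proof.
have -> : @setT (S1 R) = cis @` setT.
  apply/seteqP; split => p // _; have [t <-] := cis_surj p; by exists t.
apply: connected_continuous_connected; first exact: connT_R.
exact/continuous_subspaceT/cis_cont.
Qed.

Lemma band_conn (J : set R) (y0 : R) : connected J -> J y0 ->
  connected [set z : Ann R | J z.2].
Proof.
move=> cJ Jy0.
pose th0 : S1 R := cis 0.
have -> : [set z : Ann R | J z.2] =
  \bigcup_(th in @setT (S1 R))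
     ((fun y : R => ((th, y) : Ann R)) @` J `|` (fun p : S1 R => ((p, y0) : Ann R)) @` setT).
  apply/seteqP; split => [[p y] /= Jy|[p y] [th _ [[y' Jy' [<- <-]]|[p' _ [<- <-]]]] //].
  by exists p => //; left; exists y.
apply: bigcup_connected.
  by exists (th0, y0) => th _; right; exists th0.
move=> th _; apply: connectedU.
- by exists (th, y0); split; [exists y0|exists th].
- apply: connected_continuous_connected => //; apply/continuous_subspaceT => y.
  have K := cvg_pair (@cvg_cst _ th _ (nbhs y) _) (@cvg_id _ (nbhs y)); exact: K.
- apply: connected_continuous_connected; first exact: S1_conn.
  apply/continuous_subspaceT => p.
  have K := cvg_pair (@cvg_id _ (nbhs p)) (@cvg_cst _ y0 _ (nbhs p) _); exact: K.
Qed.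

Lemma pr2_cont : continuous (@pr2 R).
Proof. move=> z; exact: cvg_snd. Qed.

Lemma cpt_bnd (C : set (Ann R)) : compact C ->
  exists M : R, forall z, C z -> `|pr2 z| <= M.
Proof.
move=> cC.
have cK : compact (pr2 @` C).
  by apply: continuous_compact => //; apply/continuous_subspaceT/pr2_cont.
have := compact_bounded cK; rewrite /bounded_set => -[M [_ HM]].
exists (M + 1) => z Cz; apply: (HM (M + 1)); first lra.
by exists z.
Qed.

Lemma conn_sub (T : topologicalType) (A U V : set T) : connected A ->
  A `<=` U `|` V -> open U -> open V -> U `&` V = set0 ->
  (exists x, A x /\ U x) -> A `<=` U.
Proof.
move=> cA AUV oU oV UV0 [x [Ax Ux]].
have e : A `&` U = A.
  apply: cA; first by exists x.
    by exists U.
  exists (~` V); first exact: open_closedC.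
  apply/seteqP; split => y [Ay H]; split => //.
    by move=> Vy; have : (U `&` V) y by [] ; rewrite UV0.
  by case: (AUV _ Ay).
by move=> y Ay; rewrite -e in Ay; case: Ay.
Qed.

Lemma annulus_conn (U : set (Ann R)) : top_annulus U -> connected U.
Proof.
move=> [_ [h [k [_ ck hk kh]]]].
have -> : U = (set_val \o k) @` setT.
  apply/seteqP; split => [u Uu|_ [w _ <-]].
    exists (h (SigSub (mem_set Uu))) => //=; by rewrite hk.
  exact: set_valP.
apply: connected_continuous_connected.
  by have := @band_conn setT 0 connT_R I; rewrite (_ : [set z : Ann R | setT z.2] = setT).
apply/continuous_subspaceT => x; apply: continuous_comp; first exact: ck.
exact: initial_continuous.
Qed.

Definition sh (k : int) (z : Ann R) : Ann R := (z.1, z.2 + k%:~R).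

Lemma shK k z : sh (- k) (sh k z) = z.
Proof. by rewrite /sh /= intrN addrK; case: z. Qed.

Lemma shKN k z : sh k (sh (- k) z) = z.
Proof. by rewrite /sh /= intrN addrNK; case: z. Qed.

Lemma comm_sh (phi : Ann R -> Ann R) :
  (forall z, phi (vtrans z) = vtrans (phi z)) ->
  forall k z, phi (sh k z) = sh k (phi z).
Proof.
move=> hv.
have hn : forall (n : nat) z, phi (sh n z) = sh n (phi z).
  have e0 : forall w, sh 0 w = w by move=> w; rewrite /sh /= mulr0z addr0; case: w.
  elim=> [|n IH] z; first by rewrite !e0.
  have e : forall w, sh n.+1 w = vtrans (sh n w).
    by move=> w; rewrite /sh /vtrans /= -addn1 PoszD intrD addrA.
  by rewrite !e hv IH.
case=> n z; first exact: hn.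
have := hn n.+1 (sh (Negz n) z).
rewrite NegzE shKN => ->; by rewrite shK.
Qed.

Lemma iter_comm (phi psi : Ann R -> Ann R) :
  (forall z, phi (psi z) = psi (phi z)) ->
  forall n z, iter n phi (psi z) = psi (iter n phi z).
Proof. by move=> h; elim=> [|n IH] z //=; rewrite IH h. Qed.

Lemma iter_inv (phi : Ann R -> Ann R) (U : set (Ann R)) :
  (forall z, U z -> U (phi z)) -> forall n z, U z -> U (iter n phi z).
Proof. by move=> h; elim=> [|n IH] z //= Uz; apply: h; apply: IH. Qed.

Lemma inv_U (phi : Ann R -> Ann R) (C U V : set (Ann R)) (M t : R) :
  continuous phi -> (forall x, ~ C x -> ~ C (phi x)) ->
  (forall z, `|pr2 (phi z) - pr2 z| <= M) -> ~` C = U `|` V ->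
  U `&` V = set0 -> open U -> open V -> connected U ->
  (forall z : Ann R, t < pr2 z -> U z) -> forall z, U z -> U (phi z).
Proof.
move=> cphi hC hM eUV UV0 oU oV cU hU.
suff : phi @` U `<=` U by move=> H z Uz; apply: H; exists z.
apply: (@conn_sub _ _ U V) => //.
- apply: connected_continuous_connected => //; exact/continuous_subspaceT.
- move=> _ [u Uu <-]; rewrite -eUV; apply: hC.
  by have : (~` C) u by rewrite eUV; left.
- pose z0 : Ann R := (cis 0, t + `|M| + 1).
  have := hM z0; rewrite ler_norml /pr2 /= => /andP[h1 _].
  have hM0 : M <= `|M| by exact: ler_norm.
  exists (phi z0); split; first by exists z0 => //; apply: hU; rewrite /pr2 /=; 
    have := normr_ge0 M; lra.
  by apply: hU; rewrite /pr2; lra.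
Qed.

Lemma inv_V (phi : Ann R -> Ann R) (C U V : set (Ann R)) (M t : R) :
  continuous phi -> (forall x, ~ C x -> ~ C (phi x)) ->
  (forall z, `|pr2 (phi z) - pr2 z| <= M) -> ~` C = U `|` V ->
  U `&` V = set0 -> open U -> open V -> connected V ->
  (forall z : Ann R, pr2 z < t -> V z) -> forall z, V z -> V (phi z).
Proof.
move=> cphi hC hM eUV UV0 oU oV cV hV.
suff : phi @` V `<=` V by move=> H z Vz; apply: H; exists z.
apply: (@conn_sub _ _ V U) => //.
- apply: connected_continuous_connected => //; exact/continuous_subspaceT.
- move=> _ [u Vu <-]; rewrite setUC -eUV; apply: hC.
  by have : (~` C) u by rewrite eUV; right.
- by rewrite setIC.
- pose z0 : Ann R := (cis 0, t - `|M| - 1).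
  have := hM z0; rewrite ler_norml /pr2 /= => /andP[_ h1].
  have hM0 : M <= `|M| by exact: ler_norm.
  exists (phi z0); split; first by exists z0 => //; apply: hV; rewrite /pr2 /=;
    have := normr_ge0 M; lra.
  by apply: hV; rewrite /pr2; lra.
Qed.

End S.
Theorem mainTheorem9 (R : realType) (f g : Ann R -> Ann R) (C : set (Ann R)) :
  continuous f -> continuous g -> cancel f g -> cancel g f ->
  (forall z, f (vtrans z) = vtrans (f z)) ->
  bounded_diffusion f g ->
  essential C -> f @` C = C -> circloid C ->
  forall (n : int) (z : Ann R), `| pr2 (zpow f g n z) - pr2 z | <= VD C + 1.
Proof.
move=> cf cg fK gK fv [M hM] _ fC [[cC _ [U [V [eUV UV0 [aU aV] _ [[tU hU] [tV hV]]]]]] _] n z.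
have gv : forall z, g (vtrans z) = vtrans (g z).
  by move=> w; rewrite -{1}(gK w) -fv fK.
have hf : forall w, `|pr2 (f w) - pr2 w| <= M by move=> w; exact: (hM (Posz 1) w).
have hg : forall w, `|pr2 (g w) - pr2 w| <= M by move=> w; exact: (hM (Negz 0) w).
have fnC : forall x, ~ C x -> ~ C (f x).
  move=> x nCx Cfx; move: Cfx; rewrite -fC => -[c Cc /(can_inj fK) e].
  by apply: nCx; rewrite -e.
have gnC : forall x, ~ C x -> ~ C (g x).
  move=> x nCx Cgx; apply: nCx; rewrite -(gK x) -fC; by exists (g x).
have cU := annulus_conn aU; have cV := annulus_conn aV.
have oU := aU.1; have oV := aV.1.
have Uf := @inv_U _ f C U V M tU cf fnC hf eUV UV0 oU oV cU hU.
have Ug := @inv_U _ g C U V M tU cg gnC hg eUV UV0 oU oV cU hU.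
have Vf := @inv_V _ f C U V M tV cf fnC hf eUV UV0 oU oV cV hV.
have Vg := @inv_V _ g C U V M tV cg gnC hg eUV UV0 oU oV cV hV.
have Uz : forall m w, U w -> U (zpow f g m w).
  case=> m w Uw /=; first exact: (iter_inv _ _ Uf).
  apply: (Ug _); exact: (iter_inv _ _ Ug).
have Vz : forall m w, V w -> V (zpow f g m w).
  case=> m w Vw /=; first exact: (iter_inv _ _ Vf).
  apply: (Vg _); exact: (iter_inv _ _ Vg).
have shz : forall k m w, zpow f g m (sh k w) = sh k (zpow f g m w).
  move=> k [] m w; rewrite /zpow.
    exact: (iter_comm _ _ (comm_sh _ fv k)).
  exact: (iter_comm _ _ (comm_sh _ gv k)).
have [M0 hM0] := cpt_bnd cC.
have hub : has_ubound (pr2 @` C).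
  by exists M0 => _ [w Cw <-]; have := hM0 w Cw; rewrite ler_norml => /andP[].
have hlb : has_lbound (pr2 @` C).
  by exists (- M0) => _ [w Cw <-]; have := hM0 w Cw; rewrite ler_norml => /andP[].
set a := inf (pr2 @` C); set b := sup (pr2 @` C).
have Cb : forall w, C w -> pr2 w <= b by move=> w Cw; apply: ub_le_sup => //; exists w.
have Ca : forall w, C w -> a <= pr2 w by move=> w Cw; apply: ge_inf => //; exists w.
have upU : forall w, b < pr2 w -> U w.
  have : [set w : Ann R | b < w.2] `<=` U.
    apply: (@conn_sub _ _ U V) => //.
    - apply: (@band_conn R (fun y => b < y) (b + 1)); last by rewrite /=; lra.
      by apply/connected_intervalP => x y /= bx _ w /andP[xw _]; exact: lt_le_trans bx xw.
    - move=> w /= bw; have : (~` C) w by move=> Cw; have := Cb w Cw; rewrite /pr2; lra.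
      by rewrite eUV.
    - have h1 := ler_norm b; have h2 := ler_norm tU.
      have h3 := normr_ge0 b; have h4 := normr_ge0 tU.
      exists (@cis R 0, `|b| + `|tU| + 1); split => /=; first lra.
      apply: (hU _); rewrite /pr2 /=; lra.
  by move=> H w bw; apply: H.
have lowV : forall w, pr2 w < a -> V w.
  have : [set w : Ann R | w.2 < a] `<=` V.
    apply: (@conn_sub _ _ V U) => //.
    - apply: (@band_conn R (fun y => y < a) (a - 1)); last by rewrite /=; lra.
      by apply/connected_intervalP => x y /= _ ya w /andP[_ wy]; exact: le_lt_trans wy ya.
    - move=> w /= bw; have : (~` C) w by move=> Cw; have := Ca w Cw; rewrite /pr2; lra.
      by rewrite eUV setUC.
    - by rewrite setIC.
    - have h1 := ler_norm (- a); have h2 := ler_norm (- tV).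
      have e1 := normrN a; have e2 := normrN tV.
      have h3 := normr_ge0 a; have h4 := normr_ge0 tV.
      exists (@cis R 0, - `|a| - `|tV| - 1); split => /=; first lra.
      apply: (hV _); rewrite /pr2 /=; lra.
  by move=> H w bw; apply: H.
have Ua : forall w, U w -> a <= pr2 w.
  move=> w Uw; rewrite leNgt; apply/negP => /lowV Vw.
  by have : (U `&` V) w by []; rewrite UV0.
have Vb : forall w, V w -> pr2 w <= b.
  move=> w Vw; rewrite leNgt; apply/negP => /upU Uw.
  by have : (U `&` V) w by []; rewrite UV0.
rewrite /VD -/a -/b.
set h := pr2 z.
have eh : h = z.2 by [].
pose k1 := (Num.ceil (h - b) - 1)%R.
have [hk1a hk1b] : k1%:~R < h - b /\ h - b <= k1%:~R + 1.
  have e : (k1 + 1)%:~R = k1%:~R + 1 :> R by rewrite intrD.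
  have e' : k1 + 1 = Num.ceil (h - b) by rewrite /k1 subrK.
  move: (ceil_itv (h - b)) => /andP[p q]; split => //.
  by rewrite -e e'.
pose k2 := (Num.floor (h - a) + 1)%R.
have [hk2a hk2b] : k2%:~R - 1 <= h - a /\ h - a < k2%:~R.
  have e : (Num.floor (h - a) + 1)%:~R = (Num.floor (h - a))%:~R + 1 :> R by rewrite intrD.
  move: (floor_itv (h - a)) => /andP[p q]; rewrite /k2 e; split => //; lra.
have L : a + k1%:~R <= pr2 (zpow f g n z).
  have Uw : U (sh (- k1) z).
    apply: (upU _); rewrite /pr2 /= intrN; lra.
  have := Ua _ (Uz n _ Uw); rewrite shz /pr2 /= intrN => H; lra.
have G : pr2 (zpow f g n z) <= b + k2%:~R.
  have Vw : V (sh (- k2) z) by apply: (lowV _); rewrite /pr2 /= intrN; lra.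
  have := Vb _ (Vz n _ Vw); rewrite shz /pr2 /= intrN => H; lra.
clearbody k1 k2 h a b. rewrite ler_norml; apply/andP; split; lra.
Qed.
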